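(* Let $S=K[x_1,\dots,x_n]$, let $I\subset S$ be an ideal generated by monomials of degree $\le d$, $R=S/I$, and let $c\ge1$ be an integer with $c\ge d-1$. Let $X$ be the set of residue classes in $R$ of the monomials of degree $c$ not in $I$ (a basis of $(R^{(c)})_1$) and $\mathcal F=\{(Y):Y\subseteq X\}$, a Koszul filtration of $R^{(c)}$. Then for every $u=0,\dots,c-1$ the Veronese module $V_u=\bigoplus_jR_{u+jc}$ has linear quotients with respect to $\mathcal F$ (in particular $V_u$ has a linear resolution over $R^{(c)}$).
   Context: $R^{(c)}=\bigoplus_jR_{jc}$ is standard graded with $R_{jc}$ in degree $j$, and $V_u$ is the graded $R^{(c)}$-module with degree-$j$ component $R_{u+jc}$. A Koszul filtration of a standard graded algebra $A$ is a set $\mathcal F$ of ideals such that: (i) each $I\in\mathcal F$ is generated in degree $1$; (ii) $0,\mathfrak m_A\in\mathcal F$; (iii) for every $I\in\mathcal F$, $I\ne0$, there is $J\in\mathcal F$ with $J\subset I$, $I/J$ cyclic and $J:I\in\mathcal F$. A module $M$ has linear quotients with respect to $\mathcal F$ if it is minimally generated by homogeneous $m_1,\dots,m_v$ with $\langle m_1,\dots,m_{i-1}\rangle:_Am_i\in\mathcal F$ for all $i$. A module generated in a single degree $e$ has a linear resolution if its regularity $\sup_i\{t_i^A(M)-i\}$ equals $e$, where $t_i^A(M)=\sup\{j:\operatorname{Tor}_i^A(M,K)_j\neq0\}$. *)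

(* Defs.v *)
(* Concrete model of S = K[x_1..x_n]: polynomials are
   finitely supported functions from exponent vectors (monomials) to K,
   multiplied by convolution. R = S/I is handled via representatives in S
   modulo the monomial ideal I generated by a list G of monomials. *)
From HB Require Import structures.
From mathcomp Require Import all_boot all_order all_algebra.
Set Implicit Arguments. Unset Strict Implicit. Unset Printing Implicit Defensive.
Import Order.TTheory GRing.Theory.
Local Open Scope ring_scope.

Section Monomial.
Variables (K : fieldType) (n : nat).

Definition mon := {ffun 'I_n -> nat}.
Definition mdeg (m : mon) : nat := (\sum_(i < n) m i)%N.

Definition ser := mon -> K.
Definition is_poly (f : ser) : Prop :=
  exists N : nat, forall m : mon, (N < mdeg m)%N -> f m = 0.

Definition xmon (a : mon) : ser := fun m => (m == a)%:R.

(* product in S (convolution over the divisors of m) *)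
Definition smul (f g : ser) : ser := fun m =>
  \sum_(a : {ffun 'I_n -> 'I_(mdeg m).+1} | [forall i, (a i <= m i)%N])
     f [ffun i => nat_of_ord (a i)] * g [ffun i => (m i - a i)%N].

Definition ssub (f g : ser) : ser := fun m => f m - g m.

Definition lincomb (r : nat -> ser) (gs : seq ser) : ser := fun m =>
  \sum_(k < size gs) smul (r k) (nth (fun _ => 0) gs k) m.

Definition in_mideal (G : seq mon) (f : ser) : Prop :=
  exists r : nat -> ser, (forall k, is_poly (r k)) /\ f =1 lincomb r (map xmon G).

(* f = g in R = S/I *)
Definition congI (G : seq mon) (f g : ser) : Prop := in_mideal G (ssub f g).

Definition homog (f : ser) (e : nat) : Prop := forall m, mdeg m <> e -> f m = 0.

(* representatives of elements of V_u = (+)_j R_{u+jc}; for u = 0 this is R^(c) *)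
Definition in_veronese (c u : nat) (f : ser) : Prop :=
  is_poly f /\ forall m, (mdeg m %% c)%N <> u -> f m = 0.

(* f lies in the R^(c)-submodule (of R) generated by gs *)
Definition gen_sub (G : seq mon) (c : nat) (gs : seq ser) (f : ser) : Prop :=
  exists r : nat -> ser, (forall k, in_veronese c 0 (r k)) /\ congI G f (lincomb r gs).

(* colon ideal  <gs> :_{R^(c)} g  (as a predicate on representatives) *)
Definition colon (G : seq mon) (c : nat) (gs : seq ser) (g : ser) (r : ser) : Prop :=
  in_veronese c 0 r /\ gen_sub G c gs (smul r g).

(* the ideal (Y) of R^(c) generated by the residue classes of monomials in Y *)
Definition ideal_gen (G : seq mon) (c : nat) (Y : seq mon) (r : ser) : Prop :=
  in_veronese c 0 r /\ gen_sub G c (map xmon Y) r.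

(* A (an ideal of R^(c)) belongs to F = {(Y) : Y subset of X}, where X is the
   set of classes of monomials of degree c not in I *)
Definition in_filtration (G : seq mon) (c : nat) (A : ser -> Prop) : Prop :=
  exists Y : seq mon,
    (forall y, y \in Y -> mdeg y = c /\ ~ in_mideal G (xmon y)) /\
    (forall r, in_veronese c 0 r -> (A r <-> ideal_gen G c Y r)).

(* gs is a minimal system of homogeneous generators of V_u over R^(c) *)
Definition min_gens (G : seq mon) (c u : nat) (gs : seq ser) : Prop :=
  [/\ forall k, (k < size gs)%N ->
        exists j : nat, is_poly (nth (fun _ => 0) gs k) /\
                        homog (nth (fun _ => 0) gs k) (u + j * c),
      forall f, in_veronese c u f -> gen_sub G c gs f &
      forall i, (i < size gs)%N ->
        ~ gen_sub G c (take i gs ++ drop i.+1 gs) (nth (fun _ => 0) gs i)].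

Definition veronese_linear_quotients (G : seq mon) (c u : nat) : Prop :=
  exists gs : seq ser, min_gens G c u gs /\
    forall i, (i < size gs)%N ->
      in_filtration G c (colon G c (take i gs) (nth (fun _ => 0) gs i)).

End Monomial.

(* Main.v *)
Require Import Defs.
From HB Require Import structures.
From mathcomp Require Import all_boot all_order all_algebra zify.
Set Implicit Arguments. Unset Strict Implicit. Unset Printing Implicit Defensive.
Import GRing.Theory.
Local Open Scope ring_scope.

Definition mle {n} (a b : mon n) : bool := [forall i, (a i <= b i)%N].
Definition mdiff {n} (m b : mon n) : mon n := [ffun i => (m i - b i)%N].
Definition madd {n} (a b : mon n) : mon n := [ffun i => (a i + b i)%N].
Definition m0 {n} : mon n := [ffun => 0%N].
Definition divb {n} (G : seq (mon n)) (m : mon n) : bool := has (fun h => mle h m) G.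

Lemma mleP {n} (a b : mon n) : reflect (forall i, (a i <= b i)%N) (mle a b).
Proof. exact: forallP. Qed.

Lemma comp_le_deg {n} (m : mon n) i : (m i <= mdeg m)%N.
Proof. by rewrite /mdeg (bigD1 i) //= leq_addr. Qed.

Lemma mdeg_add {n} (a b : mon n) : mdeg (madd a b) = (mdeg a + mdeg b)%N.
Proof. by rewrite /mdeg -big_split; apply: eq_bigr => i _; rewrite ffunE. Qed.

Lemma madd_diff {n} (m b : mon n) : mle b m -> madd (mdiff m b) b = m.
Proof. by move/mleP=> H; apply/ffunP=> i; rewrite !ffunE subnK. Qed.

Lemma mdiff_add {n} (a b : mon n) : mdiff (madd a b) b = a.
Proof. by apply/ffunP=> i; rewrite !ffunE addnK. Qed.

Lemma mdeg_diff {n} (m b : mon n) : mle b m -> mdeg (mdiff m b) = (mdeg m - mdeg b)%N.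
Proof. move=> H; have := congr1 (@mdeg n) (madd_diff H); rewrite mdeg_add. lia. Qed.

Lemma mle_deg {n} (a b : mon n) : mle a b -> (mdeg a <= mdeg b)%N.
Proof. by move/mleP=> H; apply: leq_sum => i _. Qed.

Lemma mdeg0 {n} : mdeg (@m0 n) = 0%N.
Proof. by rewrite /mdeg big1 // => i _; rewrite ffunE. Qed.

Lemma mdeg_eq0 {n} (a : mon n) : mdeg a = 0%N -> a = m0.
Proof.
move=> H; apply/ffunP=> i; rewrite ffunE; have := comp_le_deg a i; by rewrite H leqn0 => /eqP.
Qed.

Lemma mle_eq {n} (a b : mon n) : mle a b -> mdeg a = mdeg b -> a = b.
Proof.
move=> H E; have := mdeg_diff H; rewrite E subnn => /mdeg_eq0 D.
apply/ffunP=> i; move/mleP: H => /(_ i) H.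
move/ffunP: D => /(_ i); rewrite !ffunE => /eqP; rewrite subn_eq0 => Hb; by apply/eqP; rewrite eqn_leq H Hb.
Qed.

Lemma mle_trans {n} (a b c : mon n) : mle a b -> mle b c -> mle a c.
Proof. move=> /mleP H1 /mleP H2; apply/mleP=> i; exact: leq_trans (H1 i) (H2 i). Qed.

Lemma mle0 {n} (a : mon n) : mle m0 a.
Proof. by apply/mleP=> i; rewrite ffunE. Qed.

Lemma divb_mono {n} (G : seq (mon n)) a b : mle a b -> divb G a -> divb G b.
Proof.
move=> H /hasP [h hG hl]; apply/hasP; exists h => //; exact: mle_trans hl H.
Qed.

Lemma mext {n} k (z a : mon n) : mle z a -> (mdeg z + k <= mdeg a)%N ->
  exists y, [/\ mle z y, mle y a & mdeg y = (mdeg z + k)%N].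
Proof.
elim: k z => [|k IH] z za hd.
  by exists z; split => //; [apply/mleP | rewrite addn0].
have: ~~ [forall i, (a i <= z i)%N].
  apply/negP => /forallP H.
  have := mle_deg (introT (mleP a z) H); lia.
case/forallPn => i; rewrite -ltnNge => hi.
pose e : mon n := [ffun j => nat_of_bool (j == i)].
have de : mdeg e = 1%N.
  rewrite /mdeg (bigD1 i) //= ffunE eqxx big1 // => j /negbTE ji.
  by rewrite ffunE ji.
pose z' := madd z e.
have dz : mdeg z' = (mdeg z + 1)%N by rewrite mdeg_add de.
have z'a : mle z' a.
  apply/mleP => j; rewrite !ffunE; case: (eqVneq j i) => [->|] /=.
    by rewrite addn1.
  by rewrite addn0; move/mleP: za.
have hd' : (mdeg z' + k <= mdeg a)%N by rewrite dz; lia.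
have [y [h1 h2 h3]] := IH z' z'a hd'.
exists y; split => //; last by rewrite h3 dz; lia.
apply: mle_trans h1; apply/mleP => j; rewrite !ffunE; exact: leq_addr.
Qed.

Lemma smul_xmon {K : fieldType} {n} (f : ser K n) (b m : mon n) :
  smul f (xmon K b) m = if mle b m then f (mdiff m b) else 0.
Proof.
rewrite /smul /xmon.
case: ifP => bm.
  have hlt i : (m i - b i < (mdeg m).+1)%N.
    by rewrite ltnS; apply: leq_trans (comp_le_deg m i); apply: leq_subr.
  pose a0 : {ffun 'I_n -> 'I_(mdeg m).+1} := [ffun i => Ordinal (hlt i)].
  rewrite (bigD1 a0) /=; last by apply/forallP => i; rewrite ffunE /= leq_subr.
  have -> : [ffun i => nat_of_ord (a0 i)] = mdiff m b.
    by apply/ffunP => i; rewrite !ffunE.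
  have -> : [ffun i => (m i - a0 i)%N] = b.
    apply/ffunP => i; rewrite !ffunE /=; move/mleP: bm => /(_ i); lia.
  rewrite eqxx mulr1 big1 ?addr0 // => a /andP [/forallP ha ne].
  case: eqP => [E|]; last by rewrite mulr0.
  exfalso; move/negP: ne; apply; apply/eqP/ffunP => i; apply: val_inj.
  rewrite ffunE /=; move/ffunP: E => /(_ i); rewrite ffunE => <-.
  have := ha i; lia.
rewrite big1 // => a /forallP ha.
case: eqP => [E|]; last by rewrite mulr0.
exfalso; move/negP: bm; apply; apply/mleP => i.
by rewrite -E ffunE leq_subr.
Qed.

Lemma lincomb_xmon {K : fieldType} {n} (r : nat -> ser K n) (M : seq (mon n)) m :
  lincomb r (map (@xmon K n) M) (m : mon n) =
  \sum_(k < size M) (if mle (nth m0 M k) m then r k (mdiff m (nth m0 M k)) else 0).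
Proof.
rewrite /lincomb size_map; apply: eq_bigr => k _.
by rewrite (nth_map m0) // smul_xmon.
Qed.

Lemma sum_pick {K : fieldType} (j N : nat) (x : K) :
  \sum_(k < N) (if j == k then x else 0) = if (j < N)%N then x else 0.
Proof.
case: ifP => jN.
  rewrite (bigD1 (Ordinal jN)) //= eqxx big1 ?addr0 // => k nk.
  case: eqP => // E; exfalso; move/negP: nk; apply; apply/eqP; exact: val_inj.
rewrite big1 // => k _; case: eqP => // E.
by move: (ltn_ord k); rewrite -E jN.
Qed.

Lemma mideal_div {K : fieldType} {n} (G : seq (mon n)) (f : ser K n) m :
  in_mideal G f -> f m != 0 -> divb G m.
Proof.
move=> [r [_ Hf]]; rewrite Hf lincomb_xmon => H.
apply/negPn/negP => nd; move/negP: H; apply; apply/eqP.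
apply: big1 => k _; case: ifP => // hk; exfalso; move/negP: nd; apply.
by apply/hasP; exists (nth m0 G k) => //; apply: mem_nth.
Qed.

Lemma div_mideal {K : fieldType} {n} (G : seq (mon n)) (f : ser K n) :
  is_poly f -> (forall m, f m != 0 -> divb G m) -> in_mideal G f.
Proof.
move=> [N HN] Hd.
pose r k (a : mon n) : K :=
  if find (fun h => mle h (madd a (nth m0 G k))) G == k then f (madd a (nth m0 G k)) else 0.
exists r; split.
  move=> k; exists N => a ha; rewrite /r; case: ifP => // _; apply: HN.
  by rewrite mdeg_add; apply: leq_trans ha _; apply: leq_addr.
move=> m; rewrite lincomb_xmon.
under eq_bigr => k _.
  have -> : (if mle (nth m0 G k) m then r k (mdiff m (nth m0 G k)) else 0)
          = if find (fun h => mle h m) G == k then f m else 0.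
    rewrite /r; case: ifP => hk; first by rewrite madd_diff.
    case: eqP => // E; exfalso.
    have hs : has (fun h => mle h m) G by rewrite has_find E.
    by have := nth_find m0 hs; rewrite E hk.
  over.
rewrite sum_pick -has_find; case: ifP => // hn.
by apply/eqP/negPn/negP => /Hd; rewrite /divb hn.
Qed.

Definition pm {n} (c : nat) (m : mon n) := fun x : mon n => mle x m && (mdeg (mdiff m x) %% c == 0)%N.

Lemma gen_sub_has {K : fieldType} {n} (G : seq (mon n)) c (M : seq (mon n)) (f : ser K n) m :
  gen_sub G c (map (@xmon K n) M) f -> f m != 0 -> ~~ divb G m -> has (pm c m) M.
Proof.
move=> [r [Hr Hc]] fm nd.
have E : f m = lincomb r (map (@xmon K n) M) m.
  apply/eqP; rewrite -subr_eq0; apply/eqP.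
  have := mideal_div (m := m) Hc; rewrite /ssub => H.
  by apply/eqP/negPn/negP => /H; apply/negP.
apply/negPn/negP => /hasPn nh; move/negP: fm; apply; apply/eqP.
rewrite E lincomb_xmon big1 // => k _; case: ifP => // hk.
have := nh (nth m0 M k) (mem_nth _ (ltn_ord k)); rewrite /pm hk /= => hc.
by case: (Hr k) => _ ->; last by apply/eqP.
Qed.

Lemma has_gen_sub {K : fieldType} {n} (G : seq (mon n)) c (M : seq (mon n)) (f : ser K n) :
  is_poly f -> (forall m, f m != 0 -> ~~ divb G m -> has (pm c m) M) ->
  gen_sub G c (map (@xmon K n) M) f.
Proof.
move=> [N HN] Hh.
pose r k (a : mon n) : K :=
  if (find (pm c (madd a (nth m0 M k))) M == k) && (mdeg a %% c == 0)%N
  then f (madd a (nth m0 M k)) else 0.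
exists r; split.
  move=> k; split.
    exists N => a ha; rewrite /r; case: ifP => // _; apply: HN.
    by rewrite mdeg_add; apply: leq_trans ha _; apply: leq_addr.
  move=> a ha; rewrite /r; case: ifP => // /andP [_ /eqP]; done.
have L m : lincomb r (map (@xmon K n) M) m = if has (pm c m) M then f m else 0.
  rewrite lincomb_xmon.
  under eq_bigr => k _.
    have -> : (if mle (nth m0 M k) m then r k (mdiff m (nth m0 M k)) else 0)
            = if find (pm c m) M == k then f m else 0.
      rewrite /r; case: ifP => hk.
        rewrite madd_diff //; case: eqP => E //=.
        have hs : has (pm c m) M by rewrite has_find E.
        have := nth_find m0 hs; rewrite E /pm => /andP [_ ->].
        done.
      case: eqP => // E; exfalso.
      have hs : has (pm c m) M by rewrite has_find E.
      by have := nth_find m0 hs; rewrite E /pm hk.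
    over.
  by rewrite sum_pick -has_find.
apply: div_mideal.
  exists N => m hm; rewrite /ssub L; case: ifP => _; rewrite HN // ?subrr //.
move=> m; rewrite /ssub L; case: ifP => hh; first by rewrite subrr eqxx.
rewrite subr0 => fm; apply/negPn/negP => nd.
by move: (Hh m fm nd); rewrite hh.
Qed.

Definition monsdeg n e : seq (mon n) :=
  [seq y <- map (fun t : {ffun 'I_n -> 'I_e.+1} => [ffun i => nat_of_ord (t i)])
               (enum {ffun 'I_n -> 'I_e.+1}) | mdeg y == e].

Lemma mem_monsdeg n e (y : mon n) : (y \in monsdeg n e) = (mdeg y == e).
Proof.
rewrite mem_filter; case: eqP => //= E.
have hlt i : (y i < e.+1)%N by rewrite ltnS -E comp_le_deg.
apply/mapP; exists [ffun i => Ordinal (hlt i)]; first by rewrite mem_enum.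
by apply/ffunP => i; rewrite !ffunE.
Qed.

Lemma nth_notin_take {T : eqType} (s : seq T) x0 i :
  uniq s -> (i < size s)%N -> nth x0 s i \notin take i s ++ drop i.+1 s.
Proof.
move=> us hi; move: us; rewrite -{1}(cat_take_drop i s) (drop_nth x0 hi).
rewrite cat_uniq /= => /and3P [_ h1 /andP [h2 _]].
rewrite mem_cat negb_or h2 andbT; apply/negP => hin; move/negP: h1; apply.
by rewrite /= hin.
Qed.

Lemma smul_xmon_poly {K : fieldType} {n} (r : ser K n) (g : mon n) :
  is_poly r -> is_poly (smul r (xmon K g)).
Proof.
move=> [N HN]; exists (N + mdeg g)%N => m hm; rewrite smul_xmon; case: ifP => // hg.
apply: HN; rewrite mdeg_diff //; lia.
Qed.

Lemma xmon_nz {K : fieldType} {n} (x : mon n) : xmon K x x != 0.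
Proof. by rewrite /xmon eqxx oner_neq0. Qed.

Lemma natf1 (x y z : nat) : (x <= y + z -> x - z = x -> x <= y)%N.
Proof. lia. Qed.

Lemma natf2 (x z : nat) : (x <= x - z + z)%N.
Proof. lia. Qed.

Theorem proposition3p18 (K : fieldType) (n d c : nat) (G : seq (mon n))
  (HG : forall g, g \in G -> (mdeg g <= d)%N)
  (Hc1 : (1 <= c)%N) (Hcd : (d.-1 <= c)%N) (u : nat) (Hu : (u < c)%N) :
  veronese_linear_quotients K G c u.
Proof.
pose M := undup [seq x <- monsdeg n u | ~~ divb G x].
have uM : uniq M by apply: undup_uniq.
have memM x : (x \in M) = (mdeg x == u) && ~~ divb G x.
  by rewrite mem_undup mem_filter mem_monsdeg andbC.
exists (map (@xmon K n) M); split.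
  split.
  - move=> k; rewrite size_map => hk; exists 0%N; rewrite (nth_map m0) //.
    have := mem_nth m0 hk; rewrite memM => /andP [/eqP du _].
    split.
      exists (mdeg (nth m0 M k)) => m hm; rewrite /xmon; case: eqP => // E.
      by move: hm; rewrite E ltnn.
    move=> m; rewrite mul0n addn0 /xmon; case: eqP => // -> ; by rewrite du.
  - move=> f [fp fv]; apply: has_gen_sub => // m fm nd.
    have hmod : (mdeg m %% c = u)%N.
      by apply/eqP/negPn/negP => /eqP h; move/negP: fm; apply; rewrite fv.
    have hu : (mdeg (@m0 n) + u <= mdeg m)%N.
      by rewrite mdeg0 add0n -{1}hmod leq_mod.
    have [z [_ zm dz]] := mext (mle0 m) hu.
    rewrite mdeg0 add0n in dz.
    apply/hasP; exists z.
      rewrite memM dz eqxx /=; apply/negP => /(divb_mono zm); exact/negP.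
    rewrite /pm zm mdeg_diff // dz /=.
    by rewrite {1}(divn_eq (mdeg m) c) hmod addnK modnMl.
  - move=> i; rewrite size_map => hi.
    rewrite -map_take -map_drop -map_cat (nth_map m0) // => H.
    have nd : ~~ divb G (nth m0 M i) by have := mem_nth m0 hi; rewrite memM => /andP [].
    have := gen_sub_has H (xmon_nz _) nd.
    case/hasP => x xin /andP [xl _].
    have xM : x \in M by move: xin; rewrite mem_cat => /orP [/mem_take | /mem_drop].
    have := mem_nth m0 hi; rewrite memM => /andP [/eqP d1 _].
    move: xM; rewrite memM => /andP [/eqP d2 _].
    have E := mle_eq xl (etrans d2 (esym d1)).
    by move/negP: (nth_notin_take m0 uM hi); apply; rewrite -E.
move=> i; rewrite size_map => hi.
rewrite -map_take (nth_map m0) //.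
set g := nth m0 M i.
have gM : g \in M by apply: mem_nth.
have dg : mdeg g = u by move: gM; rewrite memM => /andP [/eqP].
have ndg : ~~ divb G g by move: gM; rewrite memM => /andP [].
have gnt : g \notin take i M.
  apply/negP => h; move/negP: (nth_notin_take m0 uM hi); apply.
  by rewrite mem_cat h.
have takeM x : x \in take i M -> mdeg x = u /\ ~~ divb G x.
  by move/mem_take; rewrite memM => /andP [/eqP].
pose Y := [seq y <- monsdeg n c | ~~ divb G y &&
            (divb G (madd y g) || has (fun x => mle x (madd y g)) (take i M))].
exists Y; split.
  move=> y; rewrite mem_filter mem_monsdeg => /andP [/andP [ny _] /eqP dy].
  split => // Hm; move/negP: ny; apply; exact: mideal_div Hm (xmon_nz y).
move=> r [rp rv]; split.
-
  move=> [_ Hg]; split => //; apply: has_gen_sub => // a ra nda.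
  have ha0 : (mdeg a %% c == 0)%N by apply/negPn/negP => /eqP h; move/negP: ra; apply; rewrite rv.
  have ag : mle g (madd a g) by apply/mleP => j; rewrite ffunE leq_addl.
  have sm : smul r (xmon K g) (madd a g) = r a by rewrite smul_xmon ag mdiff_add.
  have [z [za zc zp]] : exists z, [/\ mle z a, (mdeg z <= c)%N &
       divb G (madd z g) || has (fun x => mle x (madd z g)) (take i M)].
    case: (boolP (divb G (madd a g))) => [/hasP [h hG hl] | nd].
      exists (mdiff h g); split.
      + apply/mleP => j; move/mleP: hl => /(_ j); rewrite !ffunE; lia.
      + have z1 : mle (mdiff h g) h by apply/mleP => j; rewrite ffunE leq_subr.
        have := mle_deg z1; have := HG h hG.
        case: (ltnP c (mdeg (mdiff h g))) => // hc dh dz.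
        have E : mdiff h g = h by apply: mle_eq z1 _; lia.
        exfalso; move/negP: nda; apply; apply/hasP; exists h => //.
        apply/mleP => j; move/ffunP: E => /(_ j); move/mleP: hl => /(_ j).
        rewrite !ffunE; exact: natf1.
      + apply/orP; left; apply/hasP; exists h => //; apply/mleP => j.
        rewrite !ffunE; lia.
    have := gen_sub_has Hg _ nd; rewrite sm => /(_ ra) /hasP [x xin /andP [xl _]].
    exists (mdiff x g); split.
    + apply/mleP => j; move/mleP: xl => /(_ j); rewrite !ffunE; lia.
    + have z1 : mle (mdiff x g) x by apply/mleP => j; rewrite ffunE leq_subr.
      have [dx _] := takeM x xin; apply: leq_trans (mle_deg z1) _; rewrite dx; exact: ltnW.
    + apply/orP; right; apply/hasP; exists x => //; apply/mleP => j.
      by rewrite !ffunE natf2.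
  have ca : (c <= mdeg a)%N.
    case: (posnP (mdeg a)) => [/mdeg_eq0 a0 | pa].
      exfalso; move: za zp; rewrite a0 => za.
      have z0 : z = m0.
        by apply: mdeg_eq0; apply/eqP; rewrite -leqn0 -(@mdeg0 n) mle_deg.
      have -> : madd z g = g by apply/ffunP => j; rewrite z0 !ffunE add0n.
      case/orP => [|/hasP [x xin xl]]; first by apply/negP.
      have [dx _] := takeM x xin.
      have E := mle_eq xl (etrans dx (esym dg)).
      by move/negP: gnt; apply; rewrite -E.
    by apply: dvdn_leq => //; rewrite /dvdn.
  have hz : (mdeg z + (c - mdeg z) <= mdeg a)%N by rewrite subnKC.
  have [y [zy ya dy]] := mext za hz.
  have dyc : mdeg y = c by rewrite dy subnKC.
  apply/hasP; exists y.
    rewrite mem_filter mem_monsdeg dyc eqxx andbT.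
    have yz : mle (madd z g) (madd y g).
      by apply/mleP => j; rewrite !ffunE leq_add2r; move/mleP: zy.
    apply/andP; split; first by apply/negP => /(divb_mono ya); exact/negP.
    case/orP: zp => [/(divb_mono yz) -> //| /hasP [x xin xl]].
    by apply/orP; right; apply/hasP; exists x => //; apply: mle_trans xl yz.
  rewrite /pm ya mdeg_diff // dyc /=.
  move: ha0 => /eqP h; have := divn_eq (mdeg a) c; rewrite h addn0 => ->.
  by rewrite -{3}(mul1n c) -mulnBl modnMl.
-
  move=> [_ Hg]; split => //; apply: has_gen_sub; first exact: smul_xmon_poly.
  move=> m; rewrite smul_xmon; case: ifP => gm; last by rewrite eqxx.
  move=> ra ndm.
  set a := mdiff m g.
  have am : mle a m by apply/mleP => j; rewrite ffunE leq_subr.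
  have nda : ~~ divb G a by apply/negP => /(divb_mono am); exact/negP.
  have ha0 : (mdeg a %% c == 0)%N by apply/negPn/negP => /eqP h; move/negP: ra; apply; rewrite rv.
  have := gen_sub_has Hg ra nda => /hasP [y].
  rewrite mem_filter => /andP [/andP [_ yp] _] /andP [ya _].
  have yg : mle (madd y g) m.
    rewrite -(madd_diff gm); apply/mleP => j; move/mleP: ya => /(_ j); rewrite !ffunE; lia.
  case/orP: yp => [/(divb_mono yg) h | /hasP [x xin xl]]; first by rewrite h in ndm.
  apply/hasP; exists x => //.
  have xm := mle_trans xl yg.
  rewrite /pm xm mdeg_diff //= (proj1 (takeM x xin)).
  have dm : mdeg m = (mdeg a + u)%N by rewrite -{1}(madd_diff gm) mdeg_add dg.
  by rewrite dm addnK.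
Qed.
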